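(* Assume that the solvency sets $(\mathbf{K}_t)_{t=0,\dots,T}$ are cones. (i) (NA2) holds if and only if $\Xi_t^0=L^0(\mathbf{K}_t,\mathcal{F}_t)$ for all $t\le T$. (ii) (NA2) holds if and only if $\mathrm{m}(\mathbf{K}_t|\mathcal{F}_{t-1})\subseteq\mathbf{K}_{t-1}$ a.s. for $t=1,\dots,T$. (iii) If the solvency sets are strictly proper, then (NA2) implies (SNR), i.e. $\hat\Xi_t^0\cap L^0(-\mathbf{K}_t,\mathcal{F}_t)\subseteq L^0(\mathbf{K}_t^0,\mathcal{F}_t)$ for all $t$.
   Context: $(\Omega,\mathcal{F},(\mathcal{F}_t)_{t=0,\dots,T},\mathbb{P})$ filtered complete probability space, $\mathcal{F}_0$ trivial. $L^0(\Gamma,\mathcal{F}_t)$: $\mathcal{F}_t$-measurable random vectors a.s. in $\Gamma$. Solvency sets: $\mathbf{K}_t$ is an $\mathcal{F}_t$-measurable random closed convex set in $\mathbb{R}^d$ with $\mathbf{K}_t+\mathbb{R}^d_+\subseteq\mathbf{K}_t$ and $\mathbf{K}_t\cap\mathbb{R}^d_-=\{0\}$ a.s.; $\mathbf{K}_t^0=\bigcap_{c\in\mathbb{Q}\setminus\{0\}}c\mathbf{K}_t$; strictly proper: $\mathbf{K}_t\cap(-\mathbf{K}_t)=\{0\}$ a.s. $\mathsf{A}_{t,s}=\sum_{u=t}^sL^0(-\mathbf{K}_u,\mathcal{F}_u)$. $\Xi_T^0=L^0(\mathbf{K}_T,\mathcal{F}_T)$, $\Xi_t^0=L^0(\mathbf{K}_t,\mathcal{F}_t)+(\Xi_{t+1}^0\cap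 L^0(\mathbb{R}^d,\mathcal{F}_t))$ for $t<T$ (equivalently $\Xi_t^0=(-\mathsf{A}_{t,T})\cap L^0(\mathbb{R}^d,\mathcal{F}_t)$); $\hat\Xi_T^0=\Xi_T^0$, $\hat\Xi_t^0=L^0(\mathbf{K}_t,\mathcal{F}_t)+\mathrm{cl}_0(\Xi_{t+1}^0\cap L^0(\mathbb{R}^d,\mathcal{F}_t))$ for $t<T$ ($\mathrm{cl}_0$: closure in probability). (NA2) (no arbitrage of the second kind): for every $t=0,\dots,T$ and $\eta_t\in L^0(\mathbb{R}^d,\mathcal{F}_t)$, if $(\eta_t+\mathsf{A}_{t,T})\cap L^0(\mathbf{K}_T,\mathcal{F}_T)\neq\emptyset$ then $\eta_t\in L^0(\mathbf{K}_t,\mathcal{F}_t)$. $\mathrm{m}(\mathbf{X}|\mathcal{F}_{t-1})$ is the largest $\mathcal{F}_{t-1}$-measurable random set a.s. contained in $\mathbf{X}$. *)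

(* Defs.v *)
From HB Require Import structures.
From mathcomp Require Import all_boot all_order all_algebra.
From mathcomp Require Import all_classical all_reals all_analysis.
Set Implicit Arguments. Unset Strict Implicit. Unset Printing Implicit Defensive.
Import Order.TTheory GRing.Theory Num.Theory.
Import numFieldNormedType.Exports.
Local Open Scope classical_set_scope.
Local Open Scope ring_scope.

Section Defs.
Context (dm : measure_display) (Omega : measurableType dm) (R : realType)
        (d : nat).
Notation vec := 'rV[R]_d.

Definition is_filtration (P : probability Omega R) (F : nat -> set (set Omega)) :=
  [/\ (forall t, sigma_algebra setT (F t)),
      (forall t A, F t A -> measurable A),
      (forall s t A, (s <= t)%N -> F s A -> F t A),
      (forall N A, measurable N -> P N = 0%E -> A `<=` N -> F 0%N A) &
      (forall A, F 0%N A -> P A = 0%E \/ P A = 1%E)].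

Definition rv_meas (G : set (set Omega)) (X : Omega -> vec) :=
  forall (i : 'I_d) (B : set R), measurable B -> G ((fun w => X w ord0 i) @^-1` B).

Definition rset_meas (G : set (set Omega)) (K : Omega -> set vec) :=
  forall U : set vec, open U -> G [set w | K w `&` U !=set0].

Definition convex_set (A : set vec) :=
  forall x y (l : R), A x -> A y -> 0 <= l <= 1 -> A (l *: x + (1 - l) *: y).

Definition is_cone (A : set vec) := forall (c : R) x, 0 < c -> A x -> A (c *: x).

Definition Rdplus : set vec := [set x | forall i, 0 <= x ord0 i].
Definition Rdminus : set vec := [set x | forall i, x ord0 i <= 0].

Definition solvency (P : probability Omega R) (G : set (set Omega))
    (K : Omega -> set vec) :=
  [/\ rset_meas G K, (forall w, closed (K w)), (forall w, convex_set (K w)),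
      {ae P, forall w, forall x y, K w x -> Rdplus y -> K w (x + y)} &
      {ae P, forall w, K w `&` Rdminus = [set 0]}].

Definition negset (A : set vec) : set vec := [set x | A (- x)].

Definition K0 (K : Omega -> set vec) : Omega -> set vec :=
  fun w => [set x | forall c : rat, c != 0 -> K w ((ratr c)^-1 *: x)].

Definition L0 (P : probability Omega R) (Gam : Omega -> set vec)
    (G : set (set Omega)) : set (Omega -> vec) :=
  [set X | rv_meas G X /\ {ae P, forall w, Gam w (X w)}].

Definition L0R (P : probability Omega R) (G : set (set Omega)) :=
  L0 P (fun _ => setT) G.

Definition rsum (A B : set (Omega -> vec)) : set (Omega -> vec) :=
  [set X | exists Y Z, A Y /\ B Z /\ X = (fun w => Y w + Z w)].

(* A_{t,t+k} = sum_{u=t}^{t+k} L^0(-K_u, F_u) *)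
Fixpoint Aset_aux (P : probability Omega R) (F : nat -> set (set Omega))
    (K : nat -> Omega -> set vec) (t k : nat) : set (Omega -> vec) :=
  match k with
  | 0 => L0 P (fun w => negset (K t w)) (F t)
  | k.+1 => rsum (Aset_aux P F K t k)
                 (L0 P (fun w => negset (K (t + k.+1)%N w)) (F (t + k.+1)%N))
  end.

Definition Aset P F K (t s : nat) := Aset_aux P F K t (s - t).

(* Xi^0_{T-k} by backward recursion *)
Fixpoint Xi_aux (P : probability Omega R) (F : nat -> set (set Omega))
    (K : nat -> Omega -> set vec) (T k : nat) : set (Omega -> vec) :=
  match k with
  | 0 => L0 P (K T) (F T)
  | k.+1 => rsum (L0 P (K (T - k.+1)%N) (F (T - k.+1)%N))
                 (Xi_aux P F K T k `&` L0R P (F (T - k.+1)%N))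
  end.

Definition Xi0 P F K (T t : nat) := Xi_aux P F K T (T - t).

Definition cvg_in_prob (P : probability Omega R) (X : nat -> Omega -> vec)
    (Y : Omega -> vec) :=
  forall eps : R, 0 < eps ->
    (fun n => P [set w | eps < `|X n w - Y w|]) @ \oo --> 0%E.

Definition cl0 (P : probability Omega R) (G : set (set Omega))
    (A : set (Omega -> vec)) : set (Omega -> vec) :=
  [set Y | L0R P G Y /\
           exists X : nat -> Omega -> vec, (forall n, A (X n)) /\ cvg_in_prob P X Y].

Definition hatXi0 P F K (T t : nat) : set (Omega -> vec) :=
  if (t < T)%N then
    rsum (L0 P (K t) (F t)) (cl0 P (F t) (Xi0 P F K T t.+1 `&` L0R P (F t)))
  else Xi0 P F K T T.

Definition NA2 P F K (T : nat) :=
  forall t, (t <= T)%N -> forall eta, L0R P (F t) eta ->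
    (exists xi, Aset P F K t T xi /\ L0 P (K T) (F T) (fun w => eta w + xi w)) ->
    L0 P (K t) (F t) eta.

Definition is_ccore (P : probability Omega R) (G : set (set Omega))
    (X M : Omega -> set vec) :=
  [/\ rset_meas G M, (forall w, closed (M w)),
      {ae P, forall w, M w `<=` X w} &
      forall M' : Omega -> set vec, rset_meas G M' -> (forall w, closed (M' w)) ->
        {ae P, forall w, M' w `<=` X w} -> {ae P, forall w, M' w `<=` M w}].

End Defs.

(* Main.v *)
Require Import Defs.
From HB Require Import structures.
From mathcomp Require Import all_boot all_order all_algebra.
From mathcomp Require Import all_classical all_reals all_analysis.
From mathcomp Require Import measurable_realfun.
From mathcomp Require Import ring lra zify.
Import Order.TTheory GRing.Theory Num.Theory.
Import numFieldNormedType.Exports.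
Set Implicit Arguments. Unset Strict Implicit.
Local Open Scope classical_set_scope.
Local Open Scope ring_scope.

Section Gen.
Context (dm : measure_display) (Omega : measurableType dm) (R : realType) (d : nat).
Local Notation vec := 'rV[R]_d.
Implicit Types (G : set (set Omega)) (X Y : Omega -> vec).

Lemma sigmaE {G} : sigma_algebra setT G ->
  G = (G.-sigma.-measurable : set (set (g_sigma_algebraType G))).
Proof. by move=> h; rewrite measurable_g_measurableTypeE. Qed.

Section SA.
Variables (G : set (set Omega)) (hG : sigma_algebra setT G).
Lemma GT : G setT. Proof. by rewrite (sigmaE hG); exact: measurableT. Qed.
Lemma G0 : G set0. Proof. by rewrite (sigmaE hG); exact: measurable0. Qed.
Lemma GC A : G A -> G (~` A).
Proof. by rewrite (sigmaE hG); exact: measurableC. Qed.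
Lemma GI A B : G A -> G B -> G (A `&` B).
Proof. by rewrite (sigmaE hG); exact: measurableI. Qed.
Lemma GU A B : G A -> G B -> G (A `|` B).
Proof. by rewrite (sigmaE hG); exact: measurableU. Qed.
Lemma Gbigcup (A : nat -> set Omega) : (forall n, G (A n)) -> G (\bigcup_n A n).
Proof. by rewrite (sigmaE hG) => h; exact: bigcupT_measurable. Qed.
Lemma Gfincap (S : 'I_d -> set Omega) : (forall i, G (S i)) ->
  G (\bigcap_(i in [set: 'I_d]) S i).
Proof. by rewrite (sigmaE hG) => h; apply: fin_bigcap_measurable => //; exact: finite_finset. Qed.

Definition mG (f : Omega -> R) := forall B : set R, measurable B -> G (f @^-1` B).
Lemma mGE f : mG f <-> measurable_fun (setT : set (g_sigma_algebraType G)) f.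
Proof.
split=> [h _ B mB|h B mB]; first by rewrite setTI -(sigmaE hG); exact: h.
by have := h measurableT B mB; rewrite setTI -(sigmaE hG).
Qed.
Lemma mG_cst c : mG (fun _ => c).
Proof. by apply/mGE; exact: measurable_cst. Qed.
Lemma mG_add f g : mG f -> mG g -> mG (fun w => f w + g w).
Proof. by move=> /mGE hf /mGE hg; apply/mGE; exact: measurable_funD. Qed.
Lemma mG_opp f : mG f -> mG (fun w => - f w).
Proof. by move=> /mGE hf; apply/mGE; exact: measurable_funN. Qed.
Lemma mG_norm f : mG f -> mG (fun w => `|f w|).
Proof. by move=> /mGE hf; apply/mGE; exact: measurableT_comp. Qed.

Lemma rvm_cst (c : vec) : rv_meas G (fun _ => c).
Proof. by move=> i; exact: mG_cst. Qed.
Lemma rvm_add X Y : rv_meas G X -> rv_meas G Y -> rv_meas G (fun w => X w + Y w).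
Proof.
move=> hX hY i B mB; have := mG_add (hX i) (hY i) mB.
by congr G; apply/seteqP; split => w /=; rewrite mxE.
Qed.
Lemma rvm_opp X : rv_meas G X -> rv_meas G (fun w => - X w).
Proof.
move=> hX i B mB; have := mG_opp (hX i) mB.
by congr G; apply/seteqP; split => w /=; rewrite mxE.
Qed.
Lemma rvm_if (A : set Omega) X Y : G A -> rv_meas G X -> rv_meas G Y ->
  rv_meas G (fun w => if `[< A w >] then X w else Y w).
Proof.
move=> hA hX hY i B mB.
rewrite (_ : _ @^-1` B = (A `&` ((fun w => X w ord0 i) @^-1` B)) `|`
   (~` A `&` ((fun w => Y w ord0 i) @^-1` B))).
  by apply: GU; apply: GI => //; [exact: hX|exact: GC|exact: hY].
apply/seteqP; split => w /=.
  by case: asboolP => Aw h; [left|right].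
by case=> -[Aw h]; case: asboolP.
Qed.
End SA.

Lemma rvm_mono G G' X : (forall A, G A -> G' A) -> rv_meas G X -> rv_meas G' X.
Proof. by move=> h hX i B mB; apply: h; exact: hX. Qed.

Lemma normv_coord (v : vec) i : `|v ord0 i| <= `|v|.
Proof.
by rewrite [leRHS]/Num.Def.normr /= mx_normrE; apply/bigmax_geP; right => /=; exists (ord0, i).
Qed.
Lemma normv_le (v : vec) c : 0 <= c -> (forall i, `|v ord0 i| <= c) -> `|v| <= c.
Proof.
move=> c0 h; rewrite [leLHS]/Num.Def.normr /= mx_normrE; apply: bigmax_le => // -[a i] _ /=.
by rewrite (ord1 a); exact: h.
Qed.
Lemma normv_lt (v : vec) c : 0 < c -> (forall i, `|v ord0 i| < c) -> `|v| < c.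
Proof.
move=> c0 h; rewrite [ltLHS]/Num.Def.normr /= mx_normrE; apply: bigmax_lt => // -[a i] _ /=.
by rewrite (ord1 a); exact: h.
Qed.

Section SA2.
Variables (G : set (set Omega)) (hG : sigma_algebra setT G).
Lemma G_normle X c : rv_meas G X -> 0 <= c -> G [set w | `|X w| <= c].
Proof.
move=> hX c0.
rewrite (_ : [set w | _] = \bigcap_(i in [set: 'I_d])
   ((fun w => `|X w ord0 i|) @^-1` `]-oo, c]%classic)).
  apply: (Gfincap hG) => i; apply: (mG_norm hG (hX i)); exact: measurable_itv.
apply/seteqP; split => w /=.
  by move=> h i _ /=; rewrite in_itv /=; exact: le_trans (normv_coord _ _) h.
by move=> h; apply: normv_le => // i; have := h i I; rewrite /= in_itv.
Qed.
Lemma G_normlt X c : rv_meas G X -> G [set w | `|X w| < c].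
Proof.
move=> hX; have [c0|c0] := ltP 0 c; last first.
  rewrite (_ : [set w | _] = set0); first exact: (G0 hG).
  by apply/seteqP; split => w //= h; have := le_lt_trans (normr_ge0 _) h; rewrite ltNge c0.
rewrite (_ : [set w | _] = \bigcap_(i in [set: 'I_d])
   ((fun w => `|X w ord0 i|) @^-1` `]-oo, c[%classic)).
  apply: (Gfincap hG) => i; apply: (mG_norm hG (hX i)); exact: measurable_itv.
apply/seteqP; split => w /=.
  by move=> h i _ /=; rewrite in_itv /=; exact: le_lt_trans (normv_coord _ _) h.
by move=> h; apply: normv_lt => // i; have := h i I; rewrite /= in_itv.
Qed.
End SA2.

Definition qv (n : nat) : vec :=
  if @unpickle 'rV[rat]_d n is Some v then map_mx ratr v else 0.

Lemma qv_dense (x : vec) e : 0 < e -> exists n, `|x - qv n| < e.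
Proof.
move=> e0.
have : forall i : 'I_d, exists a : rat, `|x ord0 i - ratr a| < e.
  move=> i; have [a] := @rat_in_itvoo R (x ord0 i - e) (x ord0 i) ltac:(lra).
  rewrite in_itv /= => /andP[h1 h2]; exists a; rewrite ltr_norml; apply/andP; split; lra.
move=> /fin_all_exists [a ha]; exists (pickle (\row_i a i)).
rewrite /qv pickleK; apply: normv_lt => // i; rewrite !mxE; exact: ha.
Qed.

Definition rr (m : nat) : R := (m.+1%:R)^-1.
Lemma rr_gt0 m : 0 < rr m. Proof. by rewrite /rr invr_gt0 ltr0n. Qed.
Lemma rr_small e : 0 < e -> exists m, rr m < e.
Proof.
move=> e0; exists (Num.trunc e^-1); rewrite /rr invf_plt ?posrE ?ltr0n //.
exact: truncnS_gt.
Qed.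

Lemma closed_set1v (v : vec) : closed [set v].
Proof. apply: accessible_closed_set1; apply: hausdorff_accessible; exact: norm_hausdorff. Qed.

Lemma ball_sub_open (U : set vec) x : open U -> U x ->
  exists m, ball x (4 * rr m) `<=` U.
Proof.
move=> oU Ux; have : nbhs x U by apply: open_nbhs_nbhs; split.
rewrite nbhs_ballP => -[e e0 be]; have e4 : 0 < e / 4 by rewrite divr_gt0.
have [m hm] := rr_small e4.
exists m => y hy; apply: be; move: hy; rewrite -!ball_normE /= => h; lra.
Qed.

Lemma basic_ball (U : set vec) x : open U -> U x ->
  exists n m, `|x - qv n| < rr m /\ ball (qv n) (3 * rr m) `<=` U.
Proof.
move=> oU Ux; have [m hm] := ball_sub_open oU Ux.
have [n hn] := qv_dense x (rr_gt0 m); exists n, m; split => // y.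
rewrite -!ball_normE /= => hy; apply: hm; rewrite -ball_normE /=.
have := ler_distD (qv n) x y; have := rr_gt0 m; lra.
Qed.

Section SA3.
Variables (G : set (set Omega)) (hG : sigma_algebra setT G).
Lemma G_ball X q r : rv_meas G X -> G [set w | `|X w - q| < r].
Proof. by move=> hX; apply: (@G_normlt G hG (fun w => X w - q)); apply: rvm_add => //; exact: rvm_cst. Qed.

Lemma G_open X U : rv_meas G X -> open U -> G (X @^-1` U).
Proof.
move=> hX oU.
rewrite (_ : X @^-1` U = \bigcup_n \bigcup_m
  (if `[< ball (qv n) (rr m) `<=` U >] then [set w | `|X w - qv n| < rr m] else set0)).
  apply: (Gbigcup hG) => n; apply: (Gbigcup hG) => m; case: asboolP => _.
    exact: G_ball.
  exact: (G0 hG).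
apply/seteqP; split => w /=.
  move=> Uw; have [n [m [h1 h2]]] := basic_ball oU Uw.
  exists n => //; exists m => //; case: asboolP => // nsub; exfalso; apply: nsub.
  move=> y hy; apply: h2; move: hy; rewrite -!ball_normE /=; have := rr_gt0 m; lra.
case=> n _ [m _]; case: asboolP => // sub h; apply: sub.
by rewrite -ball_normE /= distrC.
Qed.
End SA3.

Section Core.
Variables (P : probability Omega R) (G : set (set Omega)).
Hypotheses (hG : sigma_algebra setT G) (hGm : forall A, G A -> measurable A).

Definition fam (X M : Omega -> set vec) :=
  [/\ rset_meas G M, (forall w, closed (M w)) & {ae P, forall w, M w `<=` X w}].

Lemma closure_meet (A U : set vec) : open U ->
  (closure A `&` U !=set0 <-> A `&` U !=set0).
Proof.
move=> oU; split; last by case=> x [Ax Ux]; exists x; split => //; exact: subset_closure.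
case=> x [cx Ux]; apply: cx; apply: open_nbhs_nbhs; split => //.
Qed.

Lemma fam0 (X : Omega -> set vec) : fam X (fun _ => set0).
Proof.
split.
- move=> U oU; rewrite (_ : [set w | _] = set0); first exact: G0 hG.
  by apply/seteqP; split => w // -[x []].
- move=> w; exact: closed0.
- by apply: aeW => w x.
Qed.

Lemma fam_cup (X : Omega -> set vec) (Ms : nat -> Omega -> set vec) : (forall w, closed (X w)) ->
  (forall k, fam X (Ms k)) -> fam X (fun w => closure (\bigcup_k Ms k w)).
Proof.
move=> hX hMs; split.
- move=> U oU; rewrite (_ : [set w | _] = \bigcup_k [set w | Ms k w `&` U !=set0]).
    by apply: (Gbigcup hG) => k; case: (hMs k) => h _ _; exact: h.
  apply/seteqP; split => w /=.
    by move/(closure_meet _ oU) => -[x [[k _ Mx] Ux]]; exists k => //; exists x.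
  by case=> k _ [x [Mx Ux]]; apply/(closure_meet _ oU); exists x; split => //; exists k.
- by move=> w; exact: closed_closure.
- have : {ae P, forall w, forall k, Ms k w `<=` X w}.
    by apply: ae_foralln => k; case: (hMs k).
  apply: filterS => w h x cx.
  have e := (closure_id (X w)).1 (hX w); rewrite e.
  by apply: closureS cx => y [k _]; exact: h k y.
Qed.

Lemma core_exists (X : Omega -> set vec) : (forall w, closed (X w)) -> exists M, is_ccore P G X M.
Proof.
move=> hX.
pose E (M : Omega -> set vec) n m := [set w | M w `&` ball (qv n) (rr m) !=set0].
have hE M n m : fam X M -> G (E M n m).
  by case=> h _ _; apply: h; exact: ball_open.
have finE M n m : fam X M -> P (E M n m) \is a fin_num.
  move=> fM; exact: fin_num_measure (hGm (hE M n m fM)).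
pose v M n m := fine (P (E M n m)).
pose S n m := [set v M n m | M in fam X].
have vle1 M n m : fam X M -> v M n m <= 1.
  move=> fM; rewrite /v; have mE := hGm (hE M n m fM).
  have := probability_le1 P mE; rewrite -(fineK (finE M n m fM)) lee_fin //.
have hS n m : has_sup (S n m).
  split; first by exists (v (fun _ => set0) n m); exists (fun _ => set0) => //; exact: fam0.
  by exists 1 => _ [M fM <-]; exact: vle1.
have ch : forall nmj : nat * nat * nat, exists M, fam X M /\
    sup (S nmj.1.1 nmj.1.2) - rr nmj.2 < v M nmj.1.1 nmj.1.2.
  move=> [[n m] j] /=; have [_ [M fM <-] h] := sup_adherent (rr_gt0 j) (hS n m).
  by exists M.
have [Ms hMs] := choice ch.
pose Mseq k := if @unpickle (nat * nat * nat)%type k is Some nmj then Ms nmj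
  else (fun _ : Omega => set0 : set vec).
have fseq k : fam X (Mseq k).
  by rewrite /Mseq; case: unpickle => [nmj|]; [exact: (hMs nmj).1|exact: fam0].
pose Mstar w := closure (\bigcup_k Mseq k w).
have fstar : fam X Mstar := fam_cup hX fseq.
have cstar w : closed (Mstar w) by case: fstar.
exists Mstar; case: (fstar) => f1 f2 f3; split => //.
move=> M' f1' f2' f3'.
have fM' : fam X M' by split.
have vstar n m : sup (S n m) <= v Mstar n m.
  rewrite leNgt; apply/negP => lt.
  have gt0 : 0 < sup (S n m) - v Mstar n m by rewrite subr_gt0.
  have [j hj] := rr_small gt0.
  have h := (hMs (n, m, j)).2; rewrite /= in h.
  have : v (Ms (n, m, j)) n m <= v Mstar n m.
    rewrite /v; apply: fine_le; [exact: finE (hMs _).1|exact: finE fstar|].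
    apply: le_measure; rewrite ?inE; [exact: hGm (hE _ _ _ (hMs _).1)|exact: hGm (hE _ _ _ fstar)|].
    move=> w [x [Mx Bx]]; exists x; split => //; apply: subset_closure.
    by exists (pickle (n, m, j)) => //; rewrite /Mseq pickleK.
  lra.
have D0 n m : P (E M' n m `\` E Mstar n m) = 0%E.
  pose Ms2 k := if k is 0%N then Mstar else M'.
  have f2k k : fam X (Ms2 k) by case: k.
  pose Mu w := closure (\bigcup_k Ms2 k w).
  have fu : fam X Mu := fam_cup hX f2k.
  have Eu : E Mu n m = E Mstar n m `|` (E M' n m `\` E Mstar n m).
    apply/seteqP; split => w /=.
      move/(closure_meet _ (ball_open (qv n) (rr m))) => -[x [[k _ Mx] Bx]].
      have [?|nS] := pselect (E Mstar n m w); first by left.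
      right; split => //; case: k Mx => [|k] Mx /=; first by exfalso; apply: nS; exists x.
      by exists x.
    move=> H; apply/(closure_meet _ (ball_open (qv n) (rr m))).
    case: H => [[x [Mx Bx]]|[[x [Mx Bx]] _]]; exists x; split => //.
      by exists 0%N.
    by exists 1%N.
  have mS := hGm (hE _ n m fstar).
  have mD : measurable (E M' n m `\` E Mstar n m).
    exact: measurableD (hGm (hE _ n m fM')) mS.
  have hU := measureU P mS mD (setDIK _ _); rewrite -Eu in hU.
  have fD : P (E M' n m `\` E Mstar n m) \is a fin_num by exact: fin_num_measure.
  have le_u : v Mu n m <= sup (S n m) by apply: (sup_upper_bound (hS n m)); exists Mu.
  have : v Mu n m = v Mstar n m + fine (P (E M' n m `\` E Mstar n m)).
    by rewrite /v hU fineD //; exact: finE.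
  have := fine_ge0 (measure_ge0 P (E M' n m `\` E Mstar n m)).
  have := vstar n m => h1 h2 h3.
  rewrite -(fineK fD) (_ : fine _ = 0) //; lra.
have aD : {ae P, forall w, forall n m, ~ (E M' n m `\` E Mstar n m) w}.
  apply: ae_foralln => n; apply: ae_foralln => m.
  exists (E M' n m `\` E Mstar n m); split; [|exact: D0|by move=> w /= /contrapT].
  exact: measurableD (hGm (hE _ n m fM')) (hGm (hE _ n m fstar)).
move: aD; apply: filterS => w hw x Mx; apply: contrapT => nS.
have [n [m [h1 h2]]] := basic_ball (closed_openC (cstar w)) nS.
apply: (hw n m); split.
  by exists x; split => //; rewrite -ball_normE /= distrC.
case=> y [Sy By]; apply: (h2 y) => //; move: By; rewrite -!ball_normE /=.
have := rr_gt0 m; lra.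
Qed.
End Core.

Section Main.
Variables (P : probability Omega R) (F : nat -> set (set Omega))
  (K : nat -> Omega -> set vec) (T : nat).
Hypothesis hF : is_filtration P F.
Hypothesis hsolv : forall t, (t <= T)%N -> solvency P (F t) (K t).
Hypothesis hcone : forall t, (t <= T)%N -> {ae P, forall w, is_cone (K t w)}.

Lemma hsig t : sigma_algebra setT (F t). Proof. by case: hF. Qed.
Lemma hFm t A : F t A -> measurable A. Proof. by case: hF => _ h _ _ _; exact: h. Qed.
Lemma hmono s t A : (s <= t)%N -> F s A -> F t A.
Proof. by case: hF => _ _ h _ _; exact: h. Qed.

Lemma K0in {t} : (t <= T)%N -> {ae P, forall w, K t w 0}.
Proof.
move=> tT; case: (hsolv tT) => _ _ _ _ h; move: h; apply: filterS => w h.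
have : [set 0] (0 : vec) by []. by rewrite -h => -[].
Qed.

Lemma Kadd {t} : (t <= T)%N -> {ae P, forall w, forall x y, K t w x -> K t w y -> K t w (x + y)}.
Proof.
move=> tT; case: (hsolv tT) => _ _ hconv _ _; move: (hcone tT); apply: filterS => w hc x y hx hy.
have -> : x + y = 2 *: ((1/2) *: x + (1 - 1/2) *: y).
  have h1 : (2 : R) * (1/2) = 1 by field.
  have h2 : (2 : R) * (1 - 1/2) = 1 by field.
  by rewrite scalerDr !scalerA h1 h2 !scale1r.
apply: hc => //; apply: hconv => //; apply/andP; split; lra.
Qed.

Lemma Kup {t} : (t <= T)%N -> {ae P, forall w, forall x y, K t w x -> Rdplus y -> K t w (x + y)}.
Proof. by move=> tT; case: (hsolv tT). Qed.

Lemma L0_0 t : (t <= T)%N -> L0 P (K t) (F t) (fun _ => 0).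
Proof. by move=> tT; split; [exact: rvm_cst (hsig t) _|exact: K0in]. Qed.

Lemma L0n_0 t : (t <= T)%N -> L0 P (fun w => negset (K t w)) (F t) (fun _ => 0).
Proof.
move=> tT; split; first exact: rvm_cst (hsig t) _.
by move: (K0in tT); apply: filterS => w; rewrite /negset /= oppr0.
Qed.

Lemma L0R_mono s t X : (s <= t)%N -> L0R P (F s) X -> L0R P (F t) X.
Proof. by move=> st [h1 h2]; split => //; apply: rvm_mono h1 => A; exact: hmono. Qed.

Lemma L0R_of G Gam X : L0 P Gam G X -> L0R P G X.
Proof. by case=> h _; split => //; exact: aeW. Qed.

Lemma L0_addK t (X Y : Omega -> vec) : (t <= T)%N ->
  L0 P (K t) (F t) X -> L0 P (K t) (F t) Y -> L0 P (K t) (F t) (fun w => X w + Y w).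
Proof.
move=> tT [mX aX] [mY aY]; split; first exact: rvm_add (hsig t) _ _ mX mY.
by move: (Kadd tT) aX aY; apply: filterS3 => w h hx hy; exact: h.
Qed.

Definition Key t := forall xi : Omega -> vec, L0R P (F t.-1) xi ->
  {ae P, forall w, K t w (xi w)} -> L0 P (K t.-1) (F t.-1) xi.

Lemma Aset_meas t k xi : Aset_aux P F K t k xi -> rv_meas (F (t + k)) xi.
Proof.
elim: k xi => [|k IH] xi /=; first by rewrite addn0 => -[].
move=> [Y [Z [hY [[hZ _] ->]]]]; apply: rvm_add (hsig _) _ _ _ hZ.
by apply: rvm_mono (IH _ hY) => A; apply: hmono; rewrite addnS.
Qed.

Lemma Aset_single t k j Z : (j <= k)%N -> (t + k <= T)%N ->
  L0 P (fun w => negset (K (t + j) w)) (F (t + j)) Z -> Aset_aux P F K t k Z.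
Proof.
elim: k j Z => [|k IH] j Z /=.
  by rewrite leqn0 => /eqP -> _; rewrite addn0.
rewrite leq_eqVlt => /orP[/eqP ->|jk] tkT hZ.
  exists (fun _ => 0), Z; split => //; last by split => //; apply/funext => w; rewrite add0r.
  apply: (IH 0%N) => //; first lia.
  by rewrite addn0; apply: L0n_0; lia.
exists Z, (fun _ => 0); split; first by apply: (IH j) => //; lia.
split; last by apply/funext => w; rewrite addr0.
by apply: L0n_0; lia.
Qed.

Lemma NA2_Key : NA2 P F K T -> forall t, (1 <= t <= T)%N -> Key t.
Proof.
move=> hNA t /andP[t1 tT] xi hxi axi.
have st : t = t.-1.+1 by rewrite prednK.
apply: hNA => //; first lia.
exists (fun w => - xi w); split.
  rewrite /Aset; apply: (@Aset_single t.-1 (T - t.-1) 1%N); [lia|lia|].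
  rewrite addn1 -st; split.
    apply: rvm_opp (hsig _) _ _; apply: rvm_mono (proj1 hxi) => A; apply: hmono; lia.
  by move: axi; apply: filterS => w; rewrite /negset /= opprK.
rewrite (_ : (fun w => _) = fun _ => 0); first exact: L0_0.
by apply/funext => w; rewrite subrr.
Qed.

Lemma Key_NA2_aux : (forall t, (1 <= t <= T)%N -> Key t) ->
  forall k t eta xi, (t + k <= T)%N -> L0R P (F t) eta -> Aset_aux P F K t k xi ->
  L0 P (K (t + k)) (F (t + k)) (fun w => eta w + xi w) -> L0 P (K t) (F t) eta.
Proof.
move=> hKey; elim => [|k IH] t eta xi tkT heta /=.
  rewrite !addn0 => -[_ axi] [_ asum]; split; first exact: (proj1 heta).
  rewrite addn0 in tkT.
  move: (Kadd tkT) axi asum; apply: filterS3 => w h hx hs.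
  by have := h _ _ hs hx; rewrite /negset in hx; rewrite addrK.
move=> [Y [Z [hY [[mZ aZ] ->]]]] [msum asum].
apply: (IH t eta Y) => //; first lia.
have := hKey (t + k.+1)%N ltac:(lia) (fun w => eta w + Y w).
rewrite (_ : (t + k.+1).-1 = t + k)%N; last by rewrite addnS.
apply.
  split; last exact: aeW.
  apply: rvm_add (hsig _) _ _ _ (Aset_meas hY).
  apply: rvm_mono (proj1 heta) => A; apply: hmono; lia.
move: (Kadd tkT) aZ asum; apply: filterS3 => w h hz hs.
by have := h _ _ hs hz; rewrite /negset addrA addrK.
Qed.

Lemma Key_NA2 : (forall t, (1 <= t <= T)%N -> Key t) -> NA2 P F K T.
Proof.
move=> hKey t tT eta heta [xi [hxi hs]].
apply: (@Key_NA2_aux hKey (T - t)%N t eta xi) => //; first lia.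
by rewrite subnKC.
Qed.

Lemma Key_Xi_aux : (forall t, (1 <= t <= T)%N -> Key t) ->
  forall k, (k <= T)%N -> Xi_aux P F K T k = L0 P (K (T - k)) (F (T - k)).
Proof.
move=> hKey; elim => [|k IH] kT /=; first by rewrite subn0.
rewrite IH; last lia.
have e1 : (T - k = (T - k.+1).+1)%N by lia.
apply/seteqP; split => X.
  move=> [Y [Z [hY [[hZ1 hZ2] ->]]]].
  apply: L0_addK => //; first lia.
  have := hKey (T - k)%N ltac:(lia) Z; rewrite e1 /=; apply => //.
  by case: hZ1; rewrite e1.
move=> hX; exists X, (fun _ => 0); split => //; split; last by apply/funext => w; rewrite addr0.
split; first by apply: L0_0; lia.
by split; [exact: rvm_cst (hsig _) _|exact: aeW].
Qed.

Lemma Key_Xi : (forall t, (1 <= t <= T)%N -> Key t) ->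
  forall t, (t <= T)%N -> Xi0 P F K T t = L0 P (K t) (F t).
Proof.
move=> hKey t tT; rewrite /Xi0 Key_Xi_aux //; last exact: leq_subr.
by rewrite subKn.
Qed.

Lemma Xi_Key : (forall t, (t <= T)%N -> Xi0 P F K T t = L0 P (K t) (F t)) ->
  forall t, (1 <= t <= T)%N -> Key t.
Proof.
move=> h t /andP[t1 tT] xi hxi axi.
have e1 : (T - t.-1 = (T - t).+1)%N by lia.
have e2 : (T - (T - t).+1 = t.-1)%N by lia.
have := h t.-1 ltac:(lia); rewrite /Xi0 e1 /= e2 => <-.
have := h t tT; rewrite /Xi0 => Et.
exists (fun _ => 0), xi; split; first by apply: L0_0; lia.
split; last by apply/funext => w; rewrite add0r.
split => //; rewrite Et; split => //.
apply: rvm_mono (proj1 hxi) => A; apply: hmono; lia.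
Qed.

Lemma cl_K t (Xs : nat -> Omega -> vec) Y : (t <= T)%N ->
  (forall n, L0 P (K t) (F t) (Xs n)) -> L0R P (F t) Y -> cvg_in_prob P Xs Y ->
  {ae P, forall w, K t w (Y w)}.
Proof.
move=> tT hXs hY hcv.
case: (hsolv tT) => hKm hKc _ _ _.
pose A n m := [set w | `|Y w - qv n| < rr m] `&`
  ~` [set w | K t w `&` ball (qv n) (3 * rr m) !=set0].
have hA n m : F t (A n m).
  rewrite /A; apply: (GI (hsig t)). have h := G_ball (hsig t) (qv n) (rr m) (proj1 hY). exact h.
  apply: (GC (hsig t)); apply: hKm; exact: ball_open.
have aX : {ae P, forall w, forall k, K t w (Xs k w)}.
  by apply: ae_foralln => k; exact: (proj2 (hXs k)).
have A0 n m : P (A n m) = 0%E.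
  case: aX => N [mN N0 hN].
  have mC k : measurable [set w | rr m < `|Xs k w - Y w|].
    apply: (hFm (t := t)); rewrite (_ : [set w | _] = ~` [set w | `|Xs k w - Y w| <= rr m]).
      apply: (GC (hsig t)); apply: (G_normle (hsig t)); last exact/ltW/rr_gt0.
      have h := rvm_add (hsig t) (proj1 (hXs k)) (rvm_opp (hsig t) (proj1 hY)); exact h.
    by apply/seteqP; split => w /=; rewrite ltNge => /negP.
  have le (k : nat) : (P (A n m) <= P [set w | (rr m < `|Xs k w - Y w|)%R])%E.
    apply: (@le_trans _ _ (P ([set w | (rr m < `|Xs k w - Y w|)%R] `|` N))).
      apply: le_measure; rewrite ?inE //.
        by apply: hFm (hA n m).
        exact: measurableU.
      move=> w [hw1 hw2]; have [Nw|Nw] := pselect (N w); [by right|left].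
      have hk : K t w (Xs k w).
        by apply: contrapT => nk; apply: Nw; apply: hN => /= /(_ k).
      rewrite /=; have nb : ~ ball (qv n) (3 * rr m) (Xs k w).
        by move=> b; apply: hw2; exists (Xs k w).
      move: nb; rewrite -ball_normE /= => /negP; rewrite -leNgt => nb.
      have := ler_distD (Y w) (qv n) (Xs k w); move: hw1 => /= hw1.
      rewrite (distrC (qv n) (Y w)) (distrC (Y w) (Xs k w)); have := rr_gt0 m; lra.
    apply: le_trans (measureU2 P (mC k) mN) _.
    have E : (P : {content set Omega -> \bar R}) N = 0%E := N0.
    by rewrite E adde0.
  have hc := hcv (rr m) (rr_gt0 m).
  apply/eqP; rewrite eq_le measure_ge0 andbT.
  have := lime_ge (cvgP _ hc); rewrite (cvg_lim (@ereal_hausdorff R) hc).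
  by apply; apply: nearW => k; exact: le k.
have aA : {ae P, forall w, forall n m, ~ A n m w}.
  apply: ae_foralln => n; apply: ae_foralln => m.
  exists (A n m); split; [exact: hFm (hA n m) | exact: A0 | by move=> w /= /contrapT].
move: aA; apply: filterS => w hw; apply: contrapT => nK.
have [n [m [h1 h2]]] := basic_ball (closed_openC (hKc w)) nK.
apply: (hw n m); split => //= -[y [Ky By]].
exact: h2 y By Ky.
Qed.

Lemma hatXi_K : (forall t, (1 <= t <= T)%N -> Key t) ->
  forall t, (t <= T)%N -> hatXi0 P F K T t `<=` L0 P (K t) (F t).
Proof.
move=> hKey t tT; rewrite /hatXi0; case: ifP => tT'; last first.
  have -> : t = T by lia.
  by rewrite /Xi0 subnn.
move=> X [Y [Z [hY [[hZ [Xs [hXs hcv]]] ->]]]].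
apply: L0_addK => //; split; first exact: (proj1 hZ).
apply: (cl_K tT _ hZ hcv) => n.
have [hX1 hX2] := hXs n; move: hX1; rewrite Key_Xi // => -[_ aX].
by have := hKey t.+1 ltac:(lia) (Xs n) hX2 aX.
Qed.

Lemma part3 : (forall t, (t <= T)%N -> {ae P, forall w, K t w `&` negset (K t w) = [set 0]}) ->
  (forall t, (1 <= t <= T)%N -> Key t) ->
  forall t, (t <= T)%N ->
   hatXi0 P F K T t `&` L0 P (fun w => negset (K t w)) (F t) `<=` L0 P (K0 (K t)) (F t).
Proof.
move=> hstr hKey t tT X [h1 [_ an]].
have [mX aX] := hatXi_K hKey tT h1; split => //.
have a0 : {ae P, forall w, X w = 0}.
  move: (hstr t tT) aX an; apply: filterS3 => w hs hx hn.
  by have : (K t w `&` negset (K t w)) (X w) by []; rewrite hs.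
move: a0 (K0in tT); apply: filterS2 => w -> h0 c _.
by rewrite scaler0.
Qed.

Lemma ball_trick t (M : Omega -> set vec) : (1 <= t <= T)%N -> Key t ->
  rset_meas (F t.-1) M -> {ae P, forall w, M w `<=` K t w} ->
  {ae P, forall w, M w `<=` K t.-1 w}.
Proof.
move=> /andP[t1 tT] hKey hM aM.
have sT : (t.-1 <= T)%N by lia.
case: (hsolv sT) => hKm hKc _ _ _.
pose A n m := [set w | M w `&` ball (qv n) (rr m) !=set0] `&`
  ~` [set w | K t.-1 w `&` ball (qv n) (3 * rr m) !=set0].
have hA n m : F t.-1 (A n m).
  apply: (GI (hsig _)); first by apply: hM; exact: ball_open.
  by apply: (GC (hsig _)); apply: hKm; exact: ball_open.
pose c n m : vec := qv n + const_mx (rr m).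
pose eta n m w := if `[< A n m w >] then c n m else 0.
have aA n m : {ae P, forall w, ~ A n m w}.
  have meta : L0R P (F t.-1) (eta n m).
    split; last exact: aeW.
    have h := rvm_if (hsig _) (hA n m) (rvm_cst (hsig t.-1) (c n m)) (rvm_cst (hsig t.-1) 0); exact h.
  have aeta : {ae P, forall w, K t w (eta n m w)}.
    move: aM (Kup tT) (K0in tT); apply: filterS3 => w hMK hup h0.
    rewrite /eta; case: asboolP => // -[[y [My By]] _].
    have -> : c n m = y + (c n m - y) by rewrite addrC subrK.
    apply: hup; first exact: hMK.
    move=> i; rewrite !mxE.
    move: By; rewrite -ball_normE /= => By.
    have := le_lt_trans (normv_coord (qv n - y) i) By; rewrite !mxE ltr_norml.
    by move=> /andP[h1 h2]; lra.
  have [_ aK] := hKey _ meta aeta.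
  move: aK; apply: filterS => w hK hAw.
  move: hK; rewrite /eta; case: asboolP => // _ hK.
  case: hAw => _; apply; exists (c n m); split => //.
  rewrite -ball_normE /= /c opprD addrA subrr add0r normrN.
  apply: (@le_lt_trans _ _ (rr m)); last by have := rr_gt0 m; lra.
  apply: normv_le; first exact/ltW/rr_gt0.
  by move=> i; rewrite mxE ger0_norm //; exact/ltW/rr_gt0.
have aA2 : {ae P, forall w, forall n m, ~ A n m w}.
  by apply: ae_foralln => n; apply: ae_foralln => m; exact: aA.
move: aA2; apply: filterS => w hw x Mx; apply: contrapT => nK.
have [n [m [h1 h2]]] := basic_ball (closed_openC (hKc w)) nK.
apply: (hw n m); split.
  by exists x; split => //; rewrite -ball_normE /= distrC.
by case=> y [Ky By]; exact: h2 y By Ky.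
Qed.

Lemma Key_core t : (1 <= t <= T)%N -> Key t ->
  exists M, is_ccore P (F t.-1) (K t) M /\ {ae P, forall w, M w `<=` K t.-1 w}.
Proof.
move=> /andP[t1 tT] hKey.
case: (hsolv tT) => _ hKc _ _ _.
have [M hM] := core_exists P (hsig t.-1) (@hFm t.-1) hKc.
exists M; split => //; case: hM => hMm _ aM _.
apply: ball_trick => //; apply/andP; split => //.
Qed.

Lemma core_Key t : (1 <= t <= T)%N ->
  (exists M, is_ccore P (F t.-1) (K t) M /\ {ae P, forall w, M w `<=` K t.-1 w}) ->
  Key t.
Proof.
move=> /andP[t1 tT] [M [[_ _ _ hmax] hsub]] xi hxi axi.
split; first exact: (proj1 hxi).
have hs : rset_meas (F t.-1) (fun w => [set xi w]).
  move=> U oU; rewrite (_ : [set w | _] = xi @^-1` U).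
    have h := G_open (hsig t.-1) (proj1 hxi) oU; exact h.
  by apply/seteqP; split => w /=; [case=> y [-> ]|move=> Uw; exists (xi w)].
have aS : {ae P, forall w, [set xi w] `<=` K t w}.
  by move: axi; apply: filterS => w h y ->.
have := hmax _ hs (fun w => @closed_set1v (xi w)) aS.
by move=> aMs; move: aMs hsub; apply: filterS2 => w h1 h2; apply: h2; exact: h1.
Qed.

End Main.

End Gen.

Unset Implicit Arguments.
Theorem lemma7p2 (dm : measure_display) (Omega : measurableType dm)
  (R : realType) (d : nat) (P : probability Omega R)
  (F : nat -> set (set Omega)) (K : nat -> Omega -> set 'rV[R]_d) (T : nat) :
  is_filtration P F ->
  (forall t, (t <= T)%N -> solvency P (F t) (K t)) ->
  (forall t, (t <= T)%N -> {ae P, forall w, is_cone (K t w)}) ->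
  (* (i) *)
  (NA2 P F K T <-> (forall t, (t <= T)%N -> Xi0 P F K T t = L0 P (K t) (F t))) /\
  (* (ii) *)
  (NA2 P F K T <->
     (forall t, (1 <= t <= T)%N ->
        exists M, is_ccore P (F t.-1) (K t) M /\
                  {ae P, forall w, M w `<=` K t.-1 w})) /\
  (* (iii) *)
  ((forall t, (t <= T)%N -> {ae P, forall w, K t w `&` negset (K t w) = [set 0]}) ->
   NA2 P F K T ->
   forall t, (t <= T)%N ->
     hatXi0 P F K T t `&` L0 P (fun w => negset (K t w)) (F t) `<=` L0 P (K0 (K t)) (F t)).
Proof.
move=> hF hsolv hcone.
have NK := NA2_Key hF hsolv.
have KN := Key_NA2 hF hsolv hcone.
split.
  split => [h|h]; first exact: (Key_Xi hF hsolv hcone (NK h)).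
  by apply: KN; exact: (Xi_Key hF hsolv h).
split.
  split => [h t ht|h]; first exact: (Key_core hF hsolv ht (NK h t ht)).
  by apply: KN => t ht; exact: (core_Key hF ht (h t ht)).
by move=> hstr h t tT; exact: (part3 hF hsolv hcone hstr (NK h) tT).
Qed.
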